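(* Let $d\ge1$ and let $\mu$ be a Borel probability measure on $S^{d-1}$. Then \[ (\mu\otimes\mu)\bigl(\{(u,v)\in (S^{d-1})^2: u\perp v\}\bigr)\le \frac{d-1}{d}. \] Equivalently, two independent $\mu$-distributed unit vectors are non-orthogonal with probability at least $1/d$.
   Context: $S^{d-1}$ is the unit sphere in $\mathbb R^d$; $\mu\otimes\mu$ is the product measure on $(S^{d-1})^2$. *)

(* Defs.v *)
From mathcomp Require Import all_boot all_order all_algebra.
From mathcomp Require Import all_classical all_reals all_analysis.
Set Implicit Arguments. Unset Strict Implicit. Unset Printing Implicit Defensive.
Import Order.TTheory GRing.Theory Num.Theory numFieldNormedType.Exports.
Local Open Scope classical_set_scope.
Local Open Scope ring_scope.

Definition borelRd (R : realType) (d : nat) :=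
  g_sigma_algebraType (@open 'rV[R]_d).

Definition dotRd (R : realType) (d : nat) (u v : 'rV[R]_d) : R :=
  \sum_(i < d) u ord0 i * v ord0 i.

Definition sphere (R : realType) (d : nat) : set (borelRd R d) :=
  [set u | dotRd u u = 1].

Definition orth_pairs (R : realType) (d : nat) : set (borelRd R d * borelRd R d) :=
  [set p | @sphere R d p.1 /\ @sphere R d p.2 /\ dotRd p.1 p.2 = 0].

(* Main.v *)
Require Import Defs.
From mathcomp Require Import all_boot all_order all_algebra.
From mathcomp Require Import all_classical all_reals all_analysis.
From mathcomp Require Import ring lra.
From mathcomp Require Import measurable_realfun.
Import Order.TTheory GRing.Theory Num.Theory numFieldNormedType.Exports.
Local Open Scope classical_set_scope.
Local Open Scope ring_scope.
Local Open Scope ring_scope.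
Lemma mcoord (R : realType) d (i : 'I_d) :
  measurable_fun [set: borelRd R d] (fun u : borelRd R d => u ord0 i).
Proof.
apply: (measurability _ (measurable_realfun.RGenOpens.measurableE R)).
move=> _ [_ [a [b ->]] <-]; rewrite setTI.
apply: sub_sigma_algebra.
move: (@coord_continuous R 1 d ord0 i) => /continuousP; apply.
exact: interval_open.
Qed.
Arguments mcoord {R d}.

Lemma mdot (R : realType) d :
  measurable_fun [set: borelRd R d * borelRd R d]
    (fun p : borelRd R d * borelRd R d => dotRd p.1 p.2).
Proof.
rewrite /dotRd; apply: measurable_sum => i.
apply: measurable_realfun.measurable_funM.
  exact: (measurableT_comp (mcoord i) measurable_fst).
exact: (measurableT_comp (mcoord i) measurable_snd).
Qed.

Lemma mdotl (R : realType) d (x : borelRd R d) :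
  measurable_fun [set: borelRd R d] (fun v : borelRd R d => dotRd x v).
Proof.
rewrite /dotRd; apply: measurable_sum => i.
by apply: measurable_realfun.measurable_funM; [exact: measurable_cst| exact: mcoord].
Qed.

Lemma msphere (R : realType) d : measurable (@sphere R d).
Proof.
have mf : measurable_fun [set: borelRd R d] (fun u : borelRd R d => dotRd u u).
  rewrite /dotRd; apply: measurable_sum => i.
  by apply: measurable_realfun.measurable_funM; exact: mcoord.
have := mf measurableT [set 1] (measurable_set1 _).
by rewrite setTI.
Qed.

Lemma morth (R : realType) d : measurable (@orth_pairs R d).
Proof.
have -> : @orth_pairs R d = (@sphere R d `*` @sphere R d) `&`
   ((fun p : borelRd R d * borelRd R d => dotRd p.1 p.2) @^-1` [set 0]).
  apply/seteqP; split => -[x y]; rewrite /orth_pairs /preimage /=.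
    by move=> [? [? ?]].
  by move=> [[? ?] ?].
apply: measurableI; first by apply: measurableX; exact: msphere.
have := @mdot R d measurableT [set 0] (measurable_set1 _).
by rewrite setTI.
Qed.

Lemma coord_le1 (R : realType) d (u : borelRd R d) (i : 'I_d) :
  @sphere R d u -> `|u ord0 i| <= 1.
Proof.
rewrite /sphere /dotRd /= => hu.
have h : u ord0 i ^+ 2 <= 1.
  rewrite -hu (bigD1 i) //= expr2 lerDl.
  by apply: sumr_ge0 => k _; rewrite -expr2 sqr_ge0.
by rewrite -(expr_le1 (n:=2)) // real_normK ?num_real.
Qed.

Lemma dot_le1 (R : realType) d (x v : borelRd R d) :
  @sphere R d x -> @sphere R d v -> `|dotRd x v| <= 1.
Proof.
rewrite /sphere /dotRd /= => hx hv.
apply: (le_trans (ler_norm_sum _ _ _)).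
have -> : (1 : R) = \sum_(i < d) (x ord0 i * x ord0 i + v ord0 i * v ord0 i) / 2.
  by rewrite -big_distrl /= big_split /= hx hv; field.
apply: ler_sum => i _.
rewrite ler_pdivlMr // normrM.
have := sqr_ge0 (`|x ord0 i| - `|v ord0 i|).
rewrite sqrrB !real_normK ?num_real //.
move=> h; rewrite -subr_ge0; apply: le_trans h _; rewrite le_eqVlt; apply/orP; left.
apply/eqP; rewrite !expr2; ring.
Qed.

Lemma intS (R : realType) d (mu : probability (borelRd R d) R)
    (f : borelRd R d -> R) (M : R) :
  measurable_fun setT f -> (forall u, @sphere R d u -> `|f u| <= M) ->
  mu.-integrable (@sphere R d) (EFin \o f).
Proof.
move=> mf hM; apply: measurable_bounded_integrable.
- exact: msphere.
- by rewrite (le_lt_trans (probability_le1 _ _)) ?ltry //; exact: msphere.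
- exact: measurable_funTS.
- exists M; split; first exact: num_real.
  move=> N MN x Sx; apply: (le_trans (hM x Sx)); exact: ltW.
Qed.

Definition mm (R : realType) d (mu : probability (borelRd R d) R) (i j : 'I_d) : R :=
  fine (\int[mu]_(v in @sphere R d) (v ord0 i * v ord0 j)%:E)%E.
Arguments mm {R d}.

Lemma mcc (R : realType) d (i j : 'I_d) :
  measurable_fun [set: borelRd R d] (fun v : borelRd R d => v ord0 i * v ord0 j).
Proof. by apply: measurable_realfun.measurable_funM; exact: mcoord. Qed.

Lemma intcc (R : realType) d (mu : probability (borelRd R d) R) (i j : 'I_d) :
  mu.-integrable (@sphere R d) (fun v : borelRd R d => (v ord0 i * v ord0 j)%:E).
Proof.
apply: (@intS _ _ _ _ 1); first exact: mcc.
move=> u Su; rewrite normrM -[1]mulr1.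
by apply: ler_pM => //; exact: coord_le1.
Qed.

Lemma mmE (R : realType) d (mu : probability (borelRd R d) R) (i j : 'I_d) :
  (\int[mu]_(v in @sphere R d) (v ord0 i * v ord0 j)%:E = (mm mu i j)%:E)%E.
Proof. by rewrite /mm fineK //; apply: integrable_fin_num; [exact: msphere|exact: intcc]. Qed.

Lemma dot_sqr (R : realType) d (x v : borelRd R d) :
  dotRd x v ^+ 2 = \sum_(i < d) \sum_(j < d) (x ord0 i * x ord0 j) * (v ord0 i * v ord0 j).
Proof.
rewrite /dotRd expr2 big_distrl /=; apply: eq_bigr => i _.
rewrite big_distrr /=; apply: eq_bigr => j _; ring.
Qed.

Lemma qq_eq (R : realType) d (mu : probability (borelRd R d) R) (x : borelRd R d) :
  (\int[mu]_(v in @sphere R d) ((dotRd x v) ^+ 2)%:E =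
  (\sum_(i < d) \sum_(j < d) (x ord0 i * x ord0 j) * mm mu i j)%:E)%E.
Proof.
have mS := @msphere R d.
transitivity (\int[mu]_(v in @sphere R d) (\sum_(i < d) \sum_(j < d)
    (x ord0 i * x ord0 j)%:E * (v ord0 i * v ord0 j)%:E))%E.
  apply: eq_integral => v _; rewrite dot_sqr -sumEFin; apply: eq_bigr => i _.
  by rewrite -sumEFin; apply: eq_bigr => j _; rewrite EFinM.
rewrite integral_sum //; last first.
  move=> i; apply: integrable_sum => // j _.
  by apply: integrableZl => //; exact: intcc.
rewrite -sumEFin; apply: eq_bigr => i _.
rewrite integral_sum //; last by move=> j; apply: integrableZl => //; exact: intcc.
rewrite -sumEFin; apply: eq_bigr => j _.
by rewrite integralZl //; [rewrite mmE EFinM | exact: intcc].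
Qed.

Lemma point (R : realType) d (mu : probability (borelRd R d) R)
  (hmu : mu (@sphere R d) = 1%E) (x : borelRd R d) : @sphere R d x ->
  (mu (xsection (@orth_pairs R d) x) +
    (\sum_(i < d) \sum_(j < d) (x ord0 i * x ord0 j) * mm mu i j)%:E <= 1)%E.
Proof.
move=> Sx; have mS := @msphere R d.
set Z := xsection _ x.
have hZ : Z = @sphere R d `&` ((fun v => dotRd x v) @^-1` [set 0]).
  rewrite /Z /xsection; apply/seteqP; split => v /=; rewrite inE /orth_pairs /=.
    by move=> [_ [Sv h]].
  by move=> [Sv h].
have mZ : measurable Z.
  rewrite hZ; apply: measurableI => //.
  have := @mdotl R d x measurableT [set 0] (measurable_set1 _).
  by rewrite setTI.
rewrite -qq_eq -hmu (measureDI mu mS mZ).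
have -> : @sphere R d `&` Z = Z by rewrite hZ setIA setIid.
rewrite [X in (_ <= X)%E]addeC; apply: leeD2l.
apply: (@le_trans _ _ (\int[mu]_(v in @sphere R d) (\1_(@sphere R d `\` Z) v)%:E)%E).
  apply: ge0_le_integral => //.
  - by move=> v _; rewrite lee_fin sqr_ge0.
  - apply/measurable_realfun.measurable_EFinP; apply: measurable_realfun.measurable_funX; apply: measurable_funTS.
    exact: mdotl.
  - apply/measurable_realfun.measurable_EFinP; apply: measurable_realfun.measurable_indic.
    exact: measurableD.
  move=> v Sv; rewrite indicE; case: (boolP (v \in _)) => h.
    rewrite lee_fin /= -(expr1n _ 2) -real_normK ?num_real //.
    rewrite lerXn2r ?nnegrE //; exact: dot_le1.
  have : Z v.
    apply: contraNP h => nZ; rewrite inE; split => //.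
  rewrite hZ => -[_ /= ->]; by rewrite expr0n.
rewrite integral_indic //; last exact: measurableD.
by rewrite setIC setDE setIA setIid.
Qed.

Lemma Qint (R : realType) d (mu : probability (borelRd R d) R) :
  (\int[mu]_(x in @sphere R d)
     (\sum_(i < d) \sum_(j < d) (x ord0 i * x ord0 j) * mm mu i j)%:E =
  (\sum_(i < d) \sum_(j < d) mm mu i j ^+ 2)%:E)%E.
Proof.
have mS := @msphere R d.
transitivity (\int[mu]_(x in @sphere R d) (\sum_(i < d) \sum_(j < d)
    (mm mu i j)%:E * (x ord0 i * x ord0 j)%:E))%E.
  apply: eq_integral => v _; rewrite -sumEFin; apply: eq_bigr => i _.
  by rewrite -sumEFin; apply: eq_bigr => j _; rewrite -EFinM mulrC.
rewrite integral_sum //; last first.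
  move=> i; apply: integrable_sum => // j _.
  by apply: integrableZl => //; exact: intcc.
rewrite -sumEFin; apply: eq_bigr => i _.
rewrite integral_sum //; last by move=> j; apply: integrableZl => //; exact: intcc.
rewrite -sumEFin; apply: eq_bigr => j _.
by rewrite integralZl //; [rewrite mmE -EFinM expr2 | exact: intcc].
Qed.

Lemma trace1 (R : realType) d (mu : probability (borelRd R d) R)
  (hmu : mu (@sphere R d) = 1%E) : \sum_(i < d) mm mu i i = 1.
Proof.
have mS := @msphere R d.
suff : ((\sum_(i < d) mm mu i i)%:E = 1)%E by move=> [].
rewrite -sumEFin.
transitivity (\sum_(i < d) \int[mu]_(v in @sphere R d) (v ord0 i * v ord0 i)%:E)%E.
  by apply: eq_bigr => i _; rewrite mmE.
rewrite -integral_sum //; last by move=> i; exact: intcc.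
transitivity (\int[mu]_(v in @sphere R d) (cst 1%E) v)%E.
  apply: eq_integral => v /[!inE] Sv; rewrite sumEFin /=.
  by rewrite /sphere /= /dotRd in Sv; rewrite Sv.
by rewrite integral_cst // mul1e; exact: hmu.
Qed.

Lemma sumsq (R : realFieldType) n (a : 'I_n -> R) : (0 < n)%N ->
  \sum_(i < n) a i = 1 -> n%:R^-1 <= \sum_(i < n) a i ^+ 2.
Proof.
move=> n0 s1.
have h : 0 <= \sum_(i < n) (a i - n%:R^-1) ^+ 2.
  by apply: sumr_ge0 => i _; exact: sqr_ge0.
have e : \sum_(i < n) (a i - n%:R^-1) ^+ 2 =
    \sum_(i < n) a i ^+ 2 - (2 * n%:R^-1) * \sum_(i < n) a i
    + (n%:R^-1 ^+ 2) *+ n.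
  have -> : (n%:R^-1 ^+ 2) *+ n = \sum_(i < n) (n%:R^-1 ^+ 2 : R).
    by rewrite sumr_const card_ord.
  rewrite mulr_sumr -sumrN -big_split /= -big_split /=.
  apply: eq_bigr => i _; ring.
rewrite e s1 mulr1 in h.
have nz : (n%:R : R) != 0 by rewrite pnatr_eq0 -lt0n.
move: h; have -> : n%:R^-1 ^+ 2 *+ n = n%:R^-1 :> R.
  by rewrite -mulr_natr expr2 -mulrA mulVf // mulr1.
lra.
Qed.

Theorem corollary1 (R : realType) (d : nat) (hd : (1 <= d)%N)
  (mu : probability (borelRd R d) R)
  (hmu : mu (@sphere R d) = 1%E) :
  ((mu \x mu) (@orth_pairs R d) <= ((d%:R - 1) / d%:R)%:E)%E.
Proof.
have mS := @msphere R d; have mA := @morth R d.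
rewrite /product_measure1.
have gS : (\int[mu]_x (mu \o xsection (@orth_pairs R d)) x =
    \int[mu]_(x in @sphere R d) (mu \o xsection (@orth_pairs R d)) x)%E.
  rewrite [RHS]integral_mkcond; apply: eq_integral => x _; rewrite patchE.
  case: ifPn => // Sx /=.
  have -> : xsection (@orth_pairs R d) x = set0.
    apply/seteqP; split => y //=; rewrite /xsection /= => /set_mem.
    by rewrite /orth_pairs /= => -[hx _]; apply: (negP Sx); exact/mem_set.
  exact: measure0.
rewrite gS.
have mg : measurable_fun (@sphere R d) (mu \o xsection (@orth_pairs R d)).
  by apply: measurable_funTS; exact: measurable_fun_xsection.
pose Q := fun x : borelRd R d =>
  (\sum_(i < d) \sum_(j < d) (x ord0 i * x ord0 j) * mm mu i j)%:E.
have mQ : measurable_fun (@sphere R d) Q.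
  apply/measurable_realfun.measurable_EFinP; apply: measurable_funTS.
  apply: measurable_sum => i; apply: measurable_sum => j.
  apply: measurable_realfun.measurable_funM; [exact: mcc | exact: measurable_cst].
have Q0 : forall x, @sphere R d x -> (0 <= Q x)%E.
  move=> x _; rewrite /Q -qq_eq; apply: integral_ge0 => v _.
  by rewrite lee_fin sqr_ge0.
have H : (\int[mu]_(x in @sphere R d) (mu \o xsection (@orth_pairs R d)) x
     + \int[mu]_(x in @sphere R d) Q x <= 1)%E.
  rewrite -ge0_integralD //.
  apply: (@le_trans _ _ (\int[mu]_(x in @sphere R d) (cst 1%E) x)%E).
    apply: ge0_le_integral => //.
    - by move=> x Sx; apply: adde_ge0 => //; exact: Q0.
    - exact: emeasurable_funD.
    - by move=> x Sx; exact: point.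
  by rewrite integral_cst // mul1e; apply: probability_le1.
rewrite /Q Qint in H.
apply: (le_trans (y := (1 - \sum_(i < d) \sum_(j < d) mm mu i j ^+ 2)%:E)).
  by rewrite EFinB leeBrDr.
rewrite lee_fin.
have h1 : \sum_(i < d) mm mu i i ^+ 2 <= \sum_(i < d) \sum_(j < d) mm mu i j ^+ 2.
  apply: ler_sum => i _; rewrite (bigD1 i) //= lerDl.
  by apply: sumr_ge0 => j _; exact: sqr_ge0.
have h2 := @sumsq _ d (fun i => mm mu i i) hd (@trace1 R d mu hmu).
have nz : (d%:R : R) != 0 by rewrite pnatr_eq0 -lt0n.
rewrite mulrBl divff // mul1r.
lra.
Qed.
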